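(* Let $\Gamma$ be a finite group and let $\alpha_1,\dots,\alpha_l$ be the (pairwise inequivalent) irreducible unitary representations of $\Gamma$ of dimension greater than one, $\alpha_k$ acting on $\mathbb{C}^{n_k}$. For $\boldsymbol{\xi}=(\xi_1,\dots,\xi_l)\in\prod_{k=1}^l S^{n_k-1}$ (each $\xi_k$ a unit vector in $\mathbb{C}^{n_k}$) set $T_{\boldsymbol\xi}(g)=\sum_{k=1}^l\langle\xi_k,\alpha_k(g)\xi_k\rangle$, and for $g,h\in\Gamma$ let $V_{g,h}=\{\boldsymbol\xi\in\prod_k S^{n_k-1}:T_{\boldsymbol\xi}(g)=T_{\boldsymbol\xi}(h)\}$. If $g\neq h$ and at least one of $g,h$ is not central in $\Gamma$, then $V_{g,h}$ is nowhere dense; that is, for almost all choices of $\boldsymbol\xi$ we have $T_{\boldsymbol\xi}(g)\neq T_{\boldsymbol\xi}(h)$.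
   Context: $S^{n_k-1}$ denotes the unit sphere of $\mathbb{C}^{n_k}$, regarded as a real algebraic variety; ''almost all'' refers to the product of the rotation-invariant probability measures (a nowhere dense real algebraic subset of the irreducible variety $\prod_k S^{n_k-1}$ has measure zero). *)

(* Defs.v *)
From mathcomp Require Import all_boot all_algebra all_fingroup all_solvable.
From mathcomp Require Import mxrepresentation.
From mathcomp Require Export complex.
From mathcomp Require Export reals.
Set Implicit Arguments. Unset Strict Implicit. Unset Printing Implicit Defensive.
Import GRing.Theory Num.Theory.
Local Open Scope ring_scope.

Definition adjmx (R : realType) m n (A : 'M[R[i]]_(m, n)) : 'M[R[i]]_(n, m) :=
  (map_mx (fun z : R[i] => z^*) A)^T.

Definition unitary_repr (R : realType) (gT : finGroupType) n
  (rho : mx_representation R[i] [set: gT] n) : Prop :=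
  forall g : gT, rho g *m adjmx (rho g) = 1%:M.

Definition herm_form (R : realType) n (A : 'M[R[i]]_n) (u : 'rV[R[i]]_n) : R[i] :=
  \sum_(p < n) \sum_(q < n) (u 0 p)^* * A p q * u 0 q.

Definition in_sphere_prod (R : realType) l (n : 'I_l -> nat)
  (xi : forall k : 'I_l, 'rV[R[i]]_(n k)) : Prop :=
  forall k : 'I_l, \sum_(p < n k) `|xi k 0 p| ^+ 2 = 1.

Definition close (R : realType) l (n : 'I_l -> nat) (eps : R)
  (xi zeta : forall k : 'I_l, 'rV[R[i]]_(n k)) : Prop :=
  forall (k : 'I_l) (p : 'I_(n k)), `|xi k 0 p - zeta k 0 p| < (eps%:C)%C.

Definition Txi (R : realType) (gT : finGroupType) l (n : 'I_l -> nat)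
  (alpha : forall k : 'I_l, mx_representation R[i] [set: gT] (n k))
  (xi : forall k : 'I_l, 'rV[R[i]]_(n k)) (g : gT) : R[i] :=
  \sum_(k < l) herm_form (alpha k g) (xi k).

(* A set V (a predicate on prod_k C^{n_k}) is nowhere dense in the product of
   spheres (subspace topology): every nonempty relatively open subset of the
   product of spheres contains a nonempty relatively open subset disjoint from V. *)
Definition nowhere_dense_in_sphere_prod (R : realType) l (n : 'I_l -> nat)
  (V : (forall k : 'I_l, 'rV[R[i]]_(n k)) -> Prop) : Prop :=
  forall xi, in_sphere_prod xi -> forall eps : R, 0 < eps ->
  exists xi', exists2 delta : R, 0 < delta &
    in_sphere_prod xi' /\
    forall zeta, in_sphere_prod zeta -> close delta xi' zeta ->
      close eps xi zeta /\ ~ V zeta.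

(* Main.v *)
Require Import Defs.
From mathcomp Require Import all_boot all_algebra all_fingroup all_solvable.
From mathcomp Require Import mxrepresentation complex reals.
From mathcomp Require Import all_order ring lra.
From Stdlib Require Import Classical.
Import GRing.Theory Num.Theory Order.TTheory.
Local Open Scope ring_scope.

Lemma mx1_nat (R : realType) k : (k%:R : 'M[R[i]]_1) = 0 -> k = 0%N.
Proof.
move/(congr1 (fun A : 'M[R[i]]_1 => A 0 0)).
rewrite -(@rmorph_nat _ _ (@scalar_mx R[i] 1)) !mxE /= mulr1n.
by move/eqP; rewrite pnatr_eq0 => /eqP.
Qed.

Lemma group_central (R : realType) (gT : finGroupType) (g h : gT) :
  g <> h ->
  (forall m (rho : mx_representation R[i] [set: gT] m), mx_irreducible rho ->
     exists c, rho g - rho h = c%:M) ->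
  forall x, commute g x /\ commute h x.
Proof.
move=> gh Hsc x.
pose aG := regular_repr R[i] [set: gT].
have red : mx_completely_reducible aG 1%:M.
  by apply: mx_Maschke_pchar; rewrite /pgroup pcharf'_nat pnatr_eq0 -lt0n cardG_gt0.
pose M := aG g - aG h.
pose D := M *m aG x - aG x *m M.
have GE : forall y, y \in [set: gT] by move=> y; rewrite inE.
have D0 : D = 0.
  apply/eqP; apply: (mx_reducible_semisimple (mxmodule1 aG) red) => ssim.
  apply/eqP; case: ssim => I W Ws simW defW _.
  have sub : forall i, (W i <= kermx D)%MS.
    move=> i; have simU := simW i.
    have modU := mxsimple_module simU.
    have irrU : mx_irreducible (submod_repr modU) by apply/(submod_mx_irr modU).
    have [c Hc] := Hsc _ _ irrU.
    have key : forall m' (W' : 'M_(m', \rank (W i))),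
        val_submod W' *m M = c *: val_submod W'.
      move=> m' W'; rewrite /M mulmxBr -!val_submodJ ?GE //.
      by rewrite -linearB /= -mulmxBr Hc mul_mx_scalar linearZ.
    apply/sub_kermxP.
    rewrite /D mulmxBr -{1 2}(in_submodK (submx_refl (W i))) !mulmxA key.
    rewrite -val_submodJ ?GE // key val_submodJ ?GE //.
    by rewrite -scalemxAl subrr.
  have : (1%:M <= kermx D)%MS.
    by rewrite -defW; apply/sumsmx_subP => i _; apply: sub.
  by move/sub_kermxP; rewrite mul1mx.
have E : aG (g * x)%g - aG (h * x)%g - (aG (x * g)%g - aG (x * h)%g) = 0.
  by rewrite !repr_mxM ?GE // -D0 /D /M mulmxBl mulmxBr.
have P1 := congr1 (gring_proj (g * x)%g) E.
have P2 := congr1 (gring_proj (h * x)%g) E.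
rewrite !raddfB /= !gring_projE ?GE // linear0 in P1.
rewrite !raddfB /= !gring_projE ?GE // linear0 in P2.
have ne1 : ((g * x)%g == (h * x)%g) = false.
  by apply/eqP => /mulIg.
rewrite ne1 eqxx in P1; rewrite eq_sym ne1 eqxx in P2.
split; apply/eqP.
  case: eqP P1 => // _; case: eqP => _ /=.
    by rewrite subr0 oppr0 sub0r opprK -mulr2n => /mx1_nat.
  by rewrite oppr0 !subr0 !addr0 => H; have := @mx1_nat _ 1 H.
case: (_ == (x * h)%g) P2 => //; case: eqP => _ /=.
  by rewrite oppr0 subr0 sub0r -opprD => /eqP; rewrite oppr_eq0 -mulr2n => /eqP /mx1_nat.
by rewrite oppr0 !subr0 addr0 sub0r => /eqP; rewrite oppr_eq0 => /eqP H; have := @mx1_nat _ 1 H.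
Qed.

Lemma scalar_transfer (R : realType) (gT : finGroupType) (l : nat)
  (n : 'I_l -> nat)
  (alpha : forall k : 'I_l, mx_representation R[i] [set: gT] (n k))
  (alpha_all : forall (m : nat) (rho : mx_representation R[i] [set: gT] m),
      (1 < m)%N -> mx_irreducible rho -> exists k, mx_rsim rho (alpha k))
  (g h : gT) :
  (forall k, exists c, alpha k g - alpha k h = c%:M) ->
  forall m (rho : mx_representation R[i] [set: gT] m), mx_irreducible rho ->
     exists c, rho g - rho h = c%:M.
Proof.
move=> Hk m rho irr.
case: m rho irr => [|[|m]] rho irr.
- by exists 0; rewrite [_ - _]flatmx0 [RHS]flatmx0.
- by exists ((rho g - rho h) 0 0); apply: mx11_scalar.
have [k [B defm freeB homB]] := alpha_all _ rho isT irr.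
have [c Hc] := Hk k.
move: rho {irr} B freeB homB; rewrite defm => rho B freeB homB.
have GE : forall y, y \in [set: gT] by move=> y; rewrite inE.
have uB : B \in unitmx by rewrite -row_free_unit.
exists c.
have Ey : forall y, rho y = B *m alpha k y *m invmx B.
  by move=> y; rewrite -homB ?GE // mulmxK.
by rewrite !Ey -mulmxBl -mulmxBr Hc mul_mx_scalar -scalemxAl mulmxV // scalemx1.
Qed.

Section A.
Variable R : realType.
Local Notation C := R[i].
Local Open Scope complex_scope.
Definition nc (z : C) : R := complex.Re `|z|.
Lemma ncE (z : C) : `|z| = (nc z)%:C.
Proof. by rewrite /nc normc_def. Qed.
Lemma nc_ge0 z : 0 <= nc z.
Proof. by rewrite -ler0c -ncE. Qed.
Lemma nc_add x y : nc (x + y) <= nc x + nc y.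
Proof. by rewrite -lecR rmorphD /= -!ncE ler_normD. Qed.
Lemma nc_mul x y : nc (x * y) = nc x * nc y.
Proof. by apply: complexI; rewrite rmorphM /= -!ncE normrM. Qed.
Lemma nc_opp x : nc (- x) = nc x.
Proof. by rewrite /nc normrN. Qed.
Lemma nc_real (r : R) : nc r%:C = `|r|.
Proof. by rewrite /nc normc_def /= expr0n /= addr0 sqrtr_sqr. Qed.
Lemma nc_conj z : nc (conjc z) = nc z.
Proof. by case: z => a b; rewrite /nc !normc_def /= sqrrN. Qed.
Lemma nc_eq0 z : nc z = 0 -> z = 0.
Proof. by move=> h; apply/eqP; rewrite -normr_eq0 ncE h. Qed.
Lemma conj_mul z : conjc z * z = (nc z ^+ 2)%:C.
Proof.
case: z => a b; rewrite /nc normc_def /= sqr_sqrtr ?addr_ge0 ?sqr_ge0 //.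
by apply/eqP; rewrite eq_complex /=; apply/andP; split; apply/eqP; ring.
Qed.
Lemma nc_sum (I : Type) (r : seq I) (P : pred I) (F : I -> C) :
  nc (\sum_(i <- r | P i) F i) <= \sum_(i <- r | P i) nc (F i).
Proof.
by rewrite -lecR rmorph_sum /= -ncE (eq_bigr _ (fun i _ => esym (ncE (F i)))) ler_norm_sum.
Qed.
Lemma nc_lt z (e : R) : (`|z| < e%:C) = (nc z < e).
Proof. by rewrite ncE ltcR. Qed.
Lemma conjE (z : C) : Num.conj z = conjc z. Proof. by []. Qed.
Lemma conj_real (r : R) : Num.conj (r%:C) = r%:C.
Proof. by rewrite conjE conjc_real. Qed.

Definition bf m (A : 'M[C]_m) (x y : 'rV[C]_m) : C :=
  \sum_(p < m) \sum_(q < m) Num.conj (x 0 p) * A p q * y 0 q.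

Arguments bf {m}.
Lemma hf_bf m (A : 'M[C]_m) x : herm_form A x = bf A x x. Proof. by []. Qed.

Lemma bfDl m (A : 'M[C]_m) x1 x2 y : bf A (x1 + x2) y = bf A x1 y + bf A x2 y.
Proof.
rewrite /bf -big_split; apply: eq_bigr => p _; rewrite -big_split.
by apply: eq_bigr => q _; rewrite mxE rmorphD /= !mulrDl.
Qed.
Lemma bfDr m (A : 'M[C]_m) x y1 y2 : bf A x (y1 + y2) = bf A x y1 + bf A x y2.
Proof.
rewrite /bf -big_split; apply: eq_bigr => p _; rewrite -big_split.
by apply: eq_bigr => q _; rewrite mxE !mulrDr.
Qed.
Lemma bfZl m (A : 'M[C]_m) a x y : bf A (a *: x) y = Num.conj a * bf A x y.
Proof.
rewrite /bf mulr_sumr; apply: eq_bigr => p _; rewrite mulr_sumr.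
by apply: eq_bigr => q _; rewrite mxE rmorphM /= !mulrA.
Qed.
Lemma bfZr m (A : 'M[C]_m) a x y : bf A x (a *: y) = a * bf A x y.
Proof.
rewrite /bf mulr_sumr; apply: eq_bigr => p _; rewrite mulr_sumr.
by apply: eq_bigr => q _; rewrite mxE; ring.
Qed.
Lemma bfBA m (A B : 'M[C]_m) x y : bf (A - B) x y = bf A x y - bf B x y.
Proof.
rewrite /bf -sumrB; apply: eq_bigr => p _; rewrite -sumrB.
by apply: eq_bigr => q _; rewrite !mxE; ring.
Qed.
Lemma bfZA m (A : 'M[C]_m) c x y : bf (c *: A) x y = c * bf A x y.
Proof.
rewrite /bf mulr_sumr; apply: eq_bigr => p _; rewrite mulr_sumr.
by apply: eq_bigr => q _; rewrite mxE; ring.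
Qed.
Lemma sum_delta m (F : 'I_m -> C) q : \sum_(s < m) F s * (s == q)%:R = F q.
Proof.
rewrite (bigD1 q) //= eqxx mulr1 big1 ?addr0 // => s /negbTE ->.
by rewrite mulr0.
Qed.
Lemma sum_delta' m (F : 'I_m -> C) q : \sum_(s < m) (s == q)%:R * F s = F q.
Proof. by rewrite -[RHS](@sum_delta _ F q); apply: eq_bigr => s _; rewrite mulrC. Qed.
Lemma bf_delta m (A : 'M[C]_m) p q :
  bf A (delta_mx 0 p) (delta_mx 0 q) = A p q.
Proof.
rewrite /bf.
rewrite (eq_bigr (fun r => (r == p)%:R * \sum_(s < m) A r s * (s == q)%:R)).
  by rewrite sum_delta' sum_delta.
move=> r _; rewrite mulr_sumr; apply: eq_bigr => s _.
rewrite !mxE /= conjC_nat; ring.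
Qed.
Lemma hf_one m (x : 'rV[C]_m) : herm_form 1%:M x = (\sum_p nc (x 0 p) ^+ 2)%:C.
Proof.
rewrite rmorph_sum /=; apply: eq_bigr => p _.
rewrite (eq_bigr (fun q => (Num.conj (x 0 p) * x 0 q) * (p == q)%:R)).
  rewrite (eq_bigr (fun q => (Num.conj (x 0 p) * x 0 q) * (q == p)%:R)).
    by rewrite sum_delta conjE conj_mul.
  by move=> q _; rewrite eq_sym.
by move=> q _; rewrite mxE; ring.
Qed.
Lemma hf_expand m (B : 'M[C]_m) u v (t : R) :
  herm_form B (u + t%:C *: v) =
  herm_form B u + t%:C * (bf B u v + bf B v u) + (t ^+ 2)%:C * herm_form B v.
Proof.
rewrite !hf_bf bfDl !bfDr !bfZl !bfZr conj_real rmorphXn /=; ring.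
Qed.
Lemma hf_scale m (A : 'M[C]_m) (r : R) x :
  herm_form A (r%:C *: x) = (r ^+ 2)%:C * herm_form A x.
Proof. by rewrite !hf_bf bfZl bfZr conj_real rmorphXn /= mulrA -expr2. Qed.
Lemma est1 (a b t : R) : 0 <= a -> a <= 1 -> 0 <= b -> b - a <= t -> a - b <= t ->
  0 < t -> t <= 1 -> `|b ^+ 2 - a ^+ 2| <= 3 * t.
Proof. move=> *; rewrite ler_norml; apply/andP; split; nra. Qed.

Lemma est2 (N s y t M eps : R) : 0 <= M -> 0 < t -> t * (6 * M + 6) <= 1 ->
  t * (6 * M + 4) <= eps -> `|N - 1| <= 3 * M * t -> 0 < s -> s ^+ 2 = N ->
  y * s = 1 -> `|1 - y| + y * t < eps.
Proof.
move=> M0 t0 t1 te hN s0 sN ys.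
have hN' : 1 / 2 <= N.
  move: hN; rewrite ler_norml => /andP[h1 h2]; lra.
have hs : 1 / 2 <= s by nra.
have y0 : 0 < y by nra.
have hy : y <= 2 by nra.
have e1 : `|N - 1| = `|s - 1| * (s + 1).
  by rewrite -sN -[s + 1]ger0_norm ?(ltW (addr_gt0 _ _)) // -normrM; congr `|_|; ring.
have e2 : `|1 - y| = y * `|s - 1|.
  by rewrite -[y in RHS]gtr0_norm // -normrM; congr `|_|; rewrite mulrBr ys mulr1.
have a0 := normr_ge0 (s - 1).
have : `|s - 1| <= 3 * M * t by nra.
nra.
Qed.


Lemma sphere_nc m (x : 'rV[C]_m) :
  \sum_p `|x 0 p| ^+ 2 = 1 <-> \sum_p nc (x 0 p) ^+ 2 = 1.
Proof.
have -> : \sum_p `|x 0 p| ^+ 2 = (\sum_p nc (x 0 p) ^+ 2)%:C.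
  by rewrite rmorph_sum; apply: eq_bigr => p _; rewrite ncE rmorphXn.
by split=> [/(congr1 (@complex.Re R))|->].
Qed.

Lemma coord_le1 m (x : 'rV[C]_m) p : \sum_q nc (x 0 q) ^+ 2 = 1 -> nc (x 0 p) <= 1.
Proof.
move=> H; have h0 := nc_ge0 (x 0 p).
have : nc (x 0 p) ^+ 2 <= 1.
  rewrite -H (bigD1 p) //= lerDl; apply: sumr_ge0 => q _; exact: sqr_ge0.
nra.
Qed.

Lemma nc_sub x y : nc (x - y) = nc (y - x).
Proof. by rewrite -nc_opp opprB. Qed.

Lemma core m (A : 'M[C]_m) (u : 'rV[C]_m) (eps : R) :
  \sum_p nc (u 0 p) ^+ 2 = 1 -> 0 < eps ->
  (forall w : 'rV[C]_m, \sum_p nc (w 0 p) ^+ 2 = 1 ->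
     (forall p, nc (u 0 p - w 0 p) < eps) -> herm_form A w = herm_form A u) ->
  forall v : 'rV[C]_m, (forall p, nc (v 0 p) <= 1) ->
  herm_form (A - (herm_form A u)%:M) v = 0.
Proof.
move=> Hu He Hw v Hv.
set c := herm_form A u; set B := A - c%:M.
have hfB : forall x, herm_form B x = herm_form A x - c * herm_form 1%:M x.
  by move=> x; rewrite !hf_bf /B bfBA -[c%:M]scalemx1 bfZA.
have Bu : herm_form B u = 0 by rewrite hfB hf_one Hu mulr1 subrr.
have M0 : 0 <= (m%:R : R) by [].
pose tau := Order.min (1 / (6 * m%:R + 6)) (eps / (6 * m%:R + 4)).
have Z : forall t, 0 < t -> t <= tau -> herm_form B (u + t%:C *: v) = 0.
  move=> t t0; rewrite le_min => /andP[].
  rewrite ler_pdivlMr ?mul1r; last by lra.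
  rewrite ler_pdivlMr; last by lra.
  move=> t1 t2.
  have t1' : t <= 1 by nra.
  set x := u + t%:C *: v.
  have xE : forall p, x 0 p = u 0 p + t%:C * v 0 p by move=> p; rewrite !mxE.
  set N := \sum_p nc (x 0 p) ^+ 2.
  have term : forall p, `|nc (x 0 p) ^+ 2 - nc (u 0 p) ^+ 2| <= 3 * t.
    move=> p; apply: est1; rewrite ?nc_ge0 ?coord_le1 //.
      rewrite xE lerBlDl (le_trans (nc_add _ _)) // lerD2l nc_mul nc_real.
      by rewrite gtr0_norm // ler_piMr ?Hv // ltW.
    have -> : u 0 p = x 0 p + (- (t%:C * v 0 p)) by rewrite xE; ring.
    rewrite lerBlDl (le_trans (nc_add _ _)) // lerD2l nc_opp nc_mul nc_real.
    by rewrite gtr0_norm // ler_piMr ?Hv // ltW.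
  have HN : `|N - 1| <= 3 * m%:R * t.
    have -> : N - 1 = \sum_p (nc (x 0 p) ^+ 2 - nc (u 0 p) ^+ 2) by rewrite sumrB Hu.
    rewrite (le_trans (ler_norm_sum _ _ _)) //.
    rewrite (le_trans (ler_sum _ (fun p _ => term p))) //.
    rewrite sumr_const card_ord -mulr_natr; lra.
  have N0 : 0 < N.
    move: HN; rewrite ler_norml => /andP[h1 _]; nra.
  set s := Num.sqrt N.
  have s0 : 0 < s by rewrite sqrtr_gt0.
  have sN : s ^+ 2 = N by rewrite sqr_sqrtr // ltW.
  set y := s^-1.
  have ys : y * s = 1 by rewrite mulVf // gt_eqF.
  have y0 : 0 < y by rewrite invr_gt0.
  set w := y%:C *: x.
  have wE : forall p, w 0 p = y%:C * x 0 p by move=> p; rewrite mxE.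
  have wS : \sum_p nc (w 0 p) ^+ 2 = 1.
    rewrite (eq_bigr (fun p => y ^+ 2 * nc (x 0 p) ^+ 2)); last first.
      by move=> p _; rewrite wE nc_mul nc_real gtr0_norm // exprMn.
    by rewrite -mulr_sumr -/N -sN -exprMn ys expr1n.
  have wC : forall p, nc (u 0 p - w 0 p) < eps.
    move=> p.
    have -> : u 0 p - w 0 p = (1 - y)%:C * u 0 p + - ((y * t)%:C * v 0 p).
      by rewrite wE xE rmorphB rmorphM /=; ring.
    apply: (le_lt_trans (nc_add _ _)); rewrite nc_opp !nc_mul !nc_real.
    apply: (le_lt_trans _ (@est2 N s y t m%:R eps M0 t0 t1 t2 HN s0 sN ys)).
    apply: lerD.
      by rewrite ler_piMr ?normr_ge0 ?coord_le1.
    by rewrite gtr0_norm ?mulr_gt0 // ler_piMr ?Hv // ltW // mulr_gt0.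
  have HA := Hw w wS wC.
  rewrite /w hf_scale -/c in HA.
  rewrite hfB hf_one -/N.
  have -> : herm_form A x = (N * y ^+ 2)%:C * herm_form A x.
    by rewrite -sN -exprMn [s * y]mulrC ys expr1n rmorph1 mul1r.
  by rewrite rmorphM /= -mulrA HA mulrC subrr.
have tau0 : 0 < tau.
  by rewrite lt_min; apply/andP; split; apply: divr_gt0 => //; lra.
set s := tau / 2.
have s0 : 0 < s by rewrite divr_gt0.
have Z1 := Z s s0 (ltac:(rewrite /s; lra)).
have Z2 := Z (s + s) (ltac:(lra)) (ltac:(rewrite /s; lra)).
rewrite hf_expand Bu in Z1; rewrite hf_expand Bu in Z2.
rewrite !rmorphXn !rmorphD /= in Z2; rewrite rmorphXn /= in Z1.
set S := s%:C in Z1 Z2; set b := bf B u v + bf B v u in Z1 Z2.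
have E : 2 * S ^+ 2 * herm_form B v = 0.
  have -> : 2 * S ^+ 2 * herm_form B v =
    (0 + (S + S) * b + (S + S) ^+ 2 * herm_form B v) - 2 * (0 + S * b + S ^+ 2 * herm_form B v).
    ring.
  by rewrite Z1 Z2 mulr0 subr0.
have S0 : (S == 0) = false by apply/eqP => /(@complexI R) /eqP; rewrite gt_eqF.
have T0 : ((2 : C) == 0) = false by rewrite pnatr_eq0.
by move/eqP: E; rewrite !mulf_eq0 S0 T0 /= => /eqP.
Qed.


Lemma core_all m (A : 'M[C]_m) (u : 'rV[C]_m) (eps : R) :
  \sum_p nc (u 0 p) ^+ 2 = 1 -> 0 < eps ->
  (forall w : 'rV[C]_m, \sum_p nc (w 0 p) ^+ 2 = 1 ->
     (forall p, nc (u 0 p - w 0 p) < eps) -> herm_form A w = herm_form A u) ->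
  forall v : 'rV[C]_m, herm_form (A - (herm_form A u)%:M) v = 0.
Proof.
move=> Hu He Hw v.
set M := 1 + \sum_p nc (v 0 p).
have S0 : 0 <= \sum_p nc (v 0 p) by apply: sumr_ge0 => p _; exact: nc_ge0.
have M0 : 0 < M by rewrite /M; lra.
set r := M^-1.
have r0 : 0 < r by rewrite invr_gt0.
have H := @core m A u eps Hu He Hw (r%:C *: v).
have nz : (r ^+ 2)%:C != 0.
  by apply/eqP => /(@complexI R) /eqP; rewrite expf_eq0 /= gt_eqF.
have Hb : forall p, nc ((r%:C *: v) 0 p) <= 1.
  move=> p; rewrite mxE nc_mul nc_real gtr0_norm //.
  rewrite -(mulVf (negbT (gt_eqF M0))) ler_pM2l //.
  have : nc (v 0 p) <= \sum_q nc (v 0 q).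
    rewrite (bigD1 p) //= lerDl; apply: sumr_ge0 => q _; exact: nc_ge0.
  rewrite /M; lra.
have := H Hb; rewrite hf_scale => /eqP; rewrite mulf_eq0 (negbTE nz) /= => /eqP.
done.
Qed.

Lemma polar m (B : 'M[C]_m) : (forall v, herm_form B v = 0) -> B = 0.
Proof.
move=> H; apply/matrixP => p q; rewrite mxE.
have hd : forall r, B r r = 0 by move=> r; rewrite -bf_delta -hf_bf H.
have ex : forall a : C, herm_form B (delta_mx 0 p + a *: delta_mx 0 q) =
    a * B p q + Num.conj a * B q p.
  move=> a; rewrite hf_bf bfDl !bfDr !bfZl !bfZr !bf_delta !hd; ring.
have E1 := ex 1; have E2 := ex 'i%C.
rewrite H rmorph1 !mul1r in E1; rewrite H in E2.
have ci : Num.conj 'i%C = - 'i%C :> C.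
  by apply/eqP; rewrite eq_complex /= oppr0 !eqxx.
rewrite ci in E2.
have : (2 * 'i%C) * B p q = 0.
  have -> : (2 * 'i%C) * B p q = 'i%C * (B p q + B q p) + ('i%C * B p q + - 'i%C * B q p) by ring.
  by rewrite -E1 -E2; ring.
move/eqP; rewrite !mulf_eq0 pnatr_eq0 /= => /orP[/eqP ii|/eqP //].
by move: ii => /eqP; rewrite eq_complex /= oner_eq0 andbF.
Qed.

Definition FF l (n : 'I_l -> nat) (A : forall k : 'I_l, 'M[C]_(n k))
  (xi : forall k : 'I_l, 'rV[C]_(n k)) : C := \sum_k herm_form (A k) (xi k).

Arguments FF {l n}.
Lemma term_bound (a zp zq xp xq : C) (d : R) :
  nc zp <= 1 -> nc xq <= 1 -> nc (zp - xp) <= d -> nc (zq - xq) <= d ->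
  nc (Num.conj zp * a * zq - Num.conj xp * a * xq) <= nc a * (2 * d).
Proof.
move=> h1 h2 h3 h4.
have -> : Num.conj zp * a * zq - Num.conj xp * a * xq =
    a * (Num.conj zp * (zq - xq)) + a * (Num.conj (zp - xp) * xq).
  by rewrite rmorphB /=; ring.
apply: (le_trans (nc_add _ _)); rewrite !nc_mul !conjE !nc_conj -mulrDr.
apply: ler_wpM2l; first exact: nc_ge0.
have g1 := nc_ge0 zp; have g2 := nc_ge0 (zq - xq); have g3 := nc_ge0 (zp - xp).
have g4 := nc_ge0 xq.
nra.
Qed.

Lemma cont l (n : 'I_l -> nat) (A : forall k : 'I_l, 'M[C]_(n k))
  (xi : forall k : 'I_l, 'rV[C]_(n k)) :
  in_sphere_prod xi -> FF A xi <> 0 ->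
  exists2 d : R, 0 < d & forall zeta, in_sphere_prod zeta ->
    (forall k p, nc (xi k 0 p - zeta k 0 p) < d) -> FF A zeta <> 0.
Proof.
move=> Sxi Fnz.
set K := \sum_k \sum_p \sum_q nc (A k p q).
have K0 : 0 <= K.
  by do 3![apply: sumr_ge0 => ? _]; exact: nc_ge0.
set f := nc (FF A xi).
have f0 : 0 < f.
  by rewrite lt0r nc_ge0 andbT; apply/eqP => /nc_eq0.
exists (f / (2 * K + 1)); first by apply: divr_gt0 => //; lra.
move=> zeta Sz Hc Fz.
set d := f / (2 * K + 1).
have bnd : nc (FF A zeta - FF A xi) <= \sum_k \sum_p \sum_q nc (A k p q) * (2 * d).
  rewrite /FF -sumrB; apply: (le_trans (nc_sum _ _ _ _)); apply: ler_sum => k _.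
  rewrite /herm_form -sumrB; apply: (le_trans (nc_sum _ _ _ _)); apply: ler_sum => p _.
  rewrite -sumrB; apply: (le_trans (nc_sum _ _ _ _)); apply: ler_sum => q _.
  have Sk := (sphere_nc _ _).1 (Sz k); have Sk' := (sphere_nc _ _).1 (Sxi k).
  apply: term_bound; rewrite ?coord_le1 //.
    by rewrite nc_sub ltW.
  by rewrite nc_sub ltW.
have eK : \sum_k \sum_p \sum_q nc (A k p q) * (2 * d) = K * (2 * d).
  rewrite /K mulr_suml; apply: eq_bigr => k _; rewrite mulr_suml.
  by apply: eq_bigr => p _; rewrite mulr_suml.
rewrite eK Fz sub0r nc_opp -/f in bnd.
have : K * (2 * d) < f.
  have hd : d * (2 * K + 1) = f by rewrite /d divfK //; apply/negbT/gt_eqF; lra.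
  have d0 : 0 < d by apply: divr_gt0 => //; lra.
  rewrite -hd; nra.
lra.
Qed.

Lemma nc0 : nc 0 = 0. Proof. by rewrite /nc normr0. Qed.

Definition upd l (n : 'I_l -> nat) (xi : forall k : 'I_l, 'rV[C]_(n k)) (k : 'I_l)
  (w : 'rV[C]_(n k)) : forall j : 'I_l, 'rV[C]_(n j) :=
  fun j => \row_(q < n j) (if j == k then \sum_(p < n k | (p : nat) == q) w 0 p
                           else xi j 0 q).
Arguments upd {l n}.

Lemma upd_eq l (n : 'I_l -> nat) xi k w : upd (n := n) xi k w k = w.
Proof.
by apply/rowP => q; rewrite mxE eqxx (big_pred1 q).
Qed.

Lemma upd_ne l (n : 'I_l -> nat) xi k w j : j != k -> upd (n := n) xi k w j = xi j.
Proof. by move=> jk; apply/rowP => q; rewrite mxE (negbTE jk). Qed.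

Lemma FF_upd l (n : 'I_l -> nat) (A : forall k : 'I_l, 'M[C]_(n k)) xi k w :
  FF A (upd xi k w) - herm_form (A k) w = FF A xi - herm_form (A k) (xi k).
Proof.
rewrite /FF (bigD1 k) //= [in RHS](bigD1 k) //= upd_eq.
have e : forall a b : C, a + b - a = b by move=> a b; ring.
rewrite !e.
by apply: eq_bigr => j jk; rewrite upd_ne.
Qed.
End A.
Arguments nc {R}.
Arguments FF {R l n}.
Arguments upd {R l n}.
Arguments nc0 {R}.
Arguments core_all {R m A u eps}.
Arguments polar {R m B}.
Arguments cont {R l n A xi}.
Arguments FF_upd {R l n} A xi {k} w.
Arguments sphere_nc {R m x}.
Arguments upd_eq {R l n xi k w}.
Arguments upd_ne {R l n xi k w j}.
Arguments nc_lt {R}.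
Arguments nc_add {R}.
Arguments group_central {R gT g h}.


Theorem proposition6p2 (R : realType) (gT : finGroupType) (l : nat)
  (n : 'I_l -> nat)
  (alpha : forall k : 'I_l, mx_representation R[i] [set: gT] (n k))
  (* each alpha_k is unitary, irreducible, of dimension > 1 *)
  (alpha_unitary : forall k, unitary_repr (alpha k))
  (alpha_irr : forall k, mx_irreducible (alpha k))
  (alpha_dim : forall k, (1 < n k)%N)
  (* pairwise inequivalent *)
  (alpha_ineq : forall k k', k <> k' -> ~ mx_rsim (alpha k) (alpha k'))
  (* every irreducible representation of dimension > 1 is one of them *)
  (alpha_all : forall (m : nat) (rho : mx_representation R[i] [set: gT] m),
      (1 < m)%N -> mx_irreducible rho -> exists k, mx_rsim rho (alpha k))
  (g h : gT) (hgh : g <> h)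
  (hcent : g \notin ('Z([set: gT]))%g \/ h \notin ('Z([set: gT]))%g) :
  nowhere_dense_in_sphere_prod
    (fun xi : forall k : 'I_l, 'rV[R[i]]_(n k) => Txi alpha xi g = Txi alpha xi h).
Proof.
pose A := fun k => alpha k g - alpha k h.
have FE : forall xi, Txi alpha xi g - Txi alpha xi h = FF A xi.
  by move=> xi; rewrite /Txi /FF -sumrB; apply: eq_bigr => k _; rewrite !hf_bf bfBA.
case: (classic (exists k, forall c, A k <> c%:M)) => [[k Hk]|Hno]; last first.
  exfalso.
  have Hall : forall k, exists c, alpha k g - alpha k h = c%:M.
    move=> k; apply: NNPP => nk; apply: Hno; exists k => c e; apply: nk; by exists c.
  have Hc := group_central hgh (@scalar_transfer R gT l n alpha alpha_all g h Hall).
  case: hcent => /negP; apply; apply/centerP; split; rewrite ?inE //.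
    by move=> x _; exact: (Hc x).1.
  by move=> x _; exact: (Hc x).2.
move=> xi Hxi eps He.
have e2 : 0 < eps / 2 by apply: divr_gt0.
have [xi' [Sxi' [Cxi' Fxi']]] : exists xi', in_sphere_prod xi' /\
    (forall j p, nc (xi j 0 p - xi' j 0 p) < eps / 2) /\ FF A xi' <> 0.
  apply: NNPP => Hn.
  have H0 : forall z, in_sphere_prod z ->
      (forall j p, nc (xi j 0 p - z j 0 p) < eps / 2) -> FF A z = 0.
    by move=> z Sz Cz; apply: NNPP => nz; apply: Hn; exists z.
  have Fxi : FF A xi = 0 by apply: H0 => // j p; rewrite subrr nc0.
  have Hw : forall w : 'rV_(n k), \sum_p nc (w 0 p) ^+ 2 = 1 ->
      (forall p, nc (xi k 0 p - w 0 p) < eps / 2) ->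
      herm_form (A k) w = herm_form (A k) (xi k).
    move=> w Sw Cw.
    have F0 : FF A (upd xi k w) = 0.
      apply: H0.
        move=> j; case: (eqVneq j k) => [->|jk]; first by rewrite upd_eq; apply/sphere_nc.
        by rewrite upd_ne //; exact: Hxi.
      move=> j p; case: (eqVneq j k) => [e|jk].
        by move: p; rewrite e => p; rewrite upd_eq.
      by rewrite upd_ne // subrr nc0.
    have := FF_upd A xi w; rewrite F0 Fxi !sub0r => /eqP; rewrite eqr_opp => /eqP.
    done.
  have Hu : \sum_p nc (xi k 0 p) ^+ 2 = 1 by apply/sphere_nc; exact: Hxi.
  have := core_all Hu e2 Hw => /polar /eqP; rewrite subr_eq0 => /eqP.
  exact: Hk.
have [d0 d0pos Hd] := cont Sxi' Fxi'.
exists xi'; exists (Order.min d0 (eps / 2)); first by rewrite lt_min d0pos e2.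
split => // zeta Sz Cz.
have Cz' : forall j p, nc (xi' j 0 p - zeta j 0 p) < Order.min d0 (eps / 2).
  by move=> j p; rewrite -nc_lt; exact: Cz j p.
split.
  move=> j p; rewrite nc_lt.
  have -> : xi j 0 p - zeta j 0 p = (xi j 0 p - xi' j 0 p) + (xi' j 0 p - zeta j 0 p).
    by rewrite addrA subrK.
  apply: (le_lt_trans (nc_add _ _)).
  have := Cz' j p; rewrite lt_min => /andP[_ h2].
  have := Cxi' j p; lra.
move=> V; apply: (Hd zeta Sz).
  by move=> j p; have := Cz' j p; rewrite lt_min => /andP[].
by rewrite -FE V subrr.
Qed.
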